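(* Let $k\ge 0$ and $m=2k+1$, and let $ER_m(\hat K)=P_m(\hat K)+\mathrm{span}\{\hat x^{m}\hat y-\hat x\hat y^{m},\ \hat x^{m+1}-\hat y^{m+1}\}$. If $\hat v\in ER_m(\hat K)$ vanishes at all points of $G\cup I$, then $\hat v\equiv 0$.
   Context: $\hat K=[-1,1]^2$; $P_m(\hat K)$ is the space of polynomials of total degree $\le m$. Let $g_{-k},\dots,g_k$ be the zeros of the Legendre polynomial of degree $2k+1$ on $[-1,1]$. $G=\{(1,g_i),(-1,g_i),(g_i,1),(g_i,-1): i=-k,\dots,k\}$. $I$ is a set of $(2k-1)(k-1)$ interior points of $\hat K$ unisolvent for $P_{2k-3}(\hat K)$ (every polynomial in $P_{2k-3}(\hat K)$ is uniquely determined by its values on $I$); $I=\emptyset$ when $k\le1$. *)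

(* Defs.v *)
From HB Require Import structures.
From mathcomp Require Import all_boot all_order all_algebra.
Set Implicit Arguments. Unset Strict Implicit. Unset Printing Implicit Defensive.
Import Order.TTheory GRing.Theory Num.Theory.
Local Open Scope ring_scope.

Definition legendre (R : fieldType) (n : nat) : {poly R} :=
  ((2 ^ n * n`!)%N%:R)^-1 *: (('X ^+ 2 - 1) ^+ n)^`(n).

Definition inP (R : ringType) (m : nat) (f : R -> R -> R) : Prop :=
  exists c : 'I_m.+1 -> 'I_m.+1 -> R,
    forall x y, f x y = \sum_(i < m.+1) \sum_(j < m.+1 | (i + j <= m)%N)
                          c i j * x ^+ i * y ^+ j.

Definition inER (R : ringType) (m : nat) (f : R -> R -> R) : Prop :=
  exists (p : R -> R -> R) (a b : R), inP m p /\
    forall x y, f x y = p x y + a * (x ^+ m * y - x * y ^+ m)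
                              + b * (x ^+ m.+1 - y ^+ m.+1).

(* Main.v *)
Require Import Defs.
From HB Require Import structures.
From mathcomp Require Import all_boot all_order all_algebra.
From mathcomp Require Import zify ring lra.
Import Order.TTheory GRing.Theory Num.Theory.
Set Implicit Arguments. Unset Strict Implicit.
Local Open Scope ring_scope.

Section Helpers.
Variable R : rcfType.

Lemma inP_ext d (f h : R -> R -> R) : (forall x y, f x y = h x y) -> inP d f -> inP d h.
Proof. move=> E [c Hc]; exists c => x y; by rewrite -E Hc. Qed.

Lemma inP_zero d : inP d (fun _ _ : R => 0).
Proof. exists (fun _ _ => 0) => x y; rewrite big1 // => i _; rewrite big1 // => j _; by rewrite !mul0r. Qed.

Lemma inP_add d (f h : R -> R -> R) : inP d f -> inP d h -> inP d (fun x y => f x y + h x y).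
Proof.
move=> [c Hc] [c' Hc']; exists (fun i j => c i j + c' i j) => x y.
rewrite Hc Hc' -big_split; apply: eq_bigr => i _; rewrite -big_split; apply: eq_bigr => j _.
by rewrite !mulrDl.
Qed.

Lemma inP_sum d (I : Type) (r : seq I) (P : pred I) (F : I -> R -> R -> R) :
  (forall i, P i -> inP d (F i)) -> inP d (fun x y => \sum_(i <- r | P i) F i x y).
Proof.
move=> H; elim: r => [|i r IH].
  by apply: (inP_ext _ (inP_zero d)) => x y; rewrite big_nil.
case Pi: (P i).
  apply: (inP_ext _ (inP_add (H i Pi) IH)) => x y; by rewrite big_cons Pi.
by apply: (inP_ext _ IH) => x y; rewrite big_cons Pi.
Qed.

Lemma inP_mono d (a : R) (l j : nat) : (l + j <= d)%N ->
  inP d (fun x y => a * (x ^+ l * y ^+ j)).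
Proof.
move=> hlj.
have hl : (l < d.+1)%N by lia.
have hj : (j < d.+1)%N by lia.
pose lo := Ordinal hl; pose jo := Ordinal hj.
exists (fun i j' => if (i == lo) && (j' == jo) then a else 0) => x y.
rewrite (bigD1 lo) //= [X in _ + X]big1 ?addr0; last first.
  move=> i /negbTE hi; rewrite big1 // => j' _; by rewrite hi !mul0r.
rewrite (bigD1 jo) //= [X in _ + X]big1 ?addr0; last first.
  by move=> j' /andP[_ /negbTE ->]; rewrite eqxx /= !mul0r.
by rewrite !eqxx /= mulrA.
Qed.

Lemma inP0_const (f : R -> R -> R) : inP 0 f -> forall x y x' y', f x y = f x' y'.
Proof.
move=> [c Hc].
have E : forall x y, f x y = c ord0 ord0.
  move=> x y; rewrite Hc big_ord1 big_mkcond big_ord1 /=.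
  by rewrite !expr0 !mulr1.
by move=> x y x' y'; rewrite !E.
Qed.

End Helpers.
Section H2.
Variable R : rcfType.
Lemma inP_swap d (f : R -> R -> R) : inP d f -> inP d (fun x y => f y x).
Proof.
move=> [c Hc]; exists (fun i j => c j i) => x y.
rewrite Hc.
under eq_bigr do rewrite big_mkcond.
rewrite exchange_big /=; apply: eq_bigr => i _.
rewrite [RHS]big_mkcond /=; apply: eq_bigr => j _.
rewrite addnC; case: ifP => // _; ring.
Qed.

Lemma inP_row d (f : R -> R -> R) : inP d f ->
  exists F : R -> {poly R},
    [/\ (forall x0 y, f x0 y = (F x0).[y]),
        (forall x0, size (F x0) <= d.+1)%N &
        (forall x0 x1, (F x0)`_d = (F x1)`_d)].
Proof.
move=> [c Hc].
exists (fun x0 => \sum_(i < d.+1) \sum_(j < d.+1 | (i + j <= d)%N) (c i j * x0 ^+ i) *: 'X^j).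
split.
- move=> x0 y; rewrite Hc horner_sum; apply: eq_bigr => i _.
  rewrite horner_sum; apply: eq_bigr => j _.
  by rewrite hornerZ hornerXn.
- move=> x0; apply/leq_sizeP => n hn.
  rewrite coef_sum big1 // => i _; rewrite coef_sum big1 // => j _.
  rewrite coefZ coefXn.
  have -> : (n == j) = false by apply/negbTE; rewrite neq_ltn; apply/orP; right; apply: leq_trans (ltn_ord j) hn.
  by rewrite mulr0.
- have key : forall x0, (\sum_(i < d.+1) \sum_(j < d.+1 | (i + j <= d)%N) (c i j * x0 ^+ i) *: ('X^j : {poly R}))`_d
      = \sum_(i < d.+1) \sum_(j < d.+1 | (i + j <= d)%N) c i j * (d == j)%:R.
    move=> x0; rewrite coef_sum; apply: eq_bigr => i _.
    rewrite coef_sum; apply: eq_bigr => j hij.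
    rewrite coefZ coefXn.
    case: (eqVneq d j) => [ej|nej]; last by rewrite !mulr0.
    have i0 : nat_of_ord i = 0%N by lia.
    rewrite i0 expr0; congr (_ * _); exact: mulr1.
  by move=> x0 x1; rewrite !key.
Qed.

Lemma inP_div1 d (f : R -> R -> R) (t : R) : inP d f -> (forall y, f t y = 0) ->
  exists g, inP d.-1 g /\ forall x y, f x y = (x - t) * g x y.
Proof.
move=> hf ht; have [c Hc] := hf.
exists (fun x y => \sum_(i < d.+1) \sum_(j < d.+1 | (i + j <= d)%N)
          \sum_(l < i) (c i j * t ^+ l) * (x ^+ (i.-1 - l) * y ^+ j)).
split.
  apply: inP_sum => i _; apply: inP_sum => j hij; apply: inP_sum => l _.
  apply: inP_mono; have := ltn_ord l; lia.
move=> x y; have -> : f x y = f x y - f t y by rewrite ht subr0.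
rewrite !Hc -sumrB mulr_sumr; apply: eq_bigr => i _.
rewrite -sumrB mulr_sumr; apply: eq_bigr => j _. rewrite -mulrBl -mulrBr subrXX.
rewrite mulrCA -mulrA; congr (_ * _); rewrite mulr_sumr mulr_suml; apply: eq_bigr => l _; ring.
Qed.

Lemma poly_zero_ae (p : {poly R}) : (forall x, x != 1 -> x != -1 -> p.[x] = 0) -> p = 0.
Proof.
move=> H; apply/eqP; apply/negPn/negP => hp.
pose rs := [seq (i.+2)%:R : R | i <- iota 0 (size p)].
suff [A U] : all (root p) rs /\ uniq rs.
  by have := @max_poly_roots _ p rs hp A U; rewrite size_map size_iota ltnn.
split.
  apply/allP => z /mapP [i _ ->]; apply/eqP; apply: H.
    by rewrite pnatr_eq1.
  have h0 : (0 : R) <= i%:R := ler0n _ _.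
  rewrite -addn2 natrD; apply/eqP => e; lra.
rewrite map_inj_uniq ?iota_uniq // => i j /eqP; rewrite eqr_nat => /eqP; lia.
Qed.

Lemma derivn_val n (c : R) (h : {poly R}) :
  ((('X - c%:P) ^+ n * h)^`(n)).[c] = (n`!)%:R * h.[c].
Proof.
elim: n h => [|n IH] h; first by rewrite expr0 mul1r derivn0 mul1r.
rewrite derivSn derivM deriv_exp derivXsubC mul1r /=.
have -> : ('X - c%:P) ^+ n *+ n.+1 * h + ('X - c%:P) ^+ n.+1 * h^`()
   = ('X - c%:P) ^+ n * (h *+ n.+1 + ('X - c%:P) * h^`()).
  rewrite exprS; ring.
rewrite IH hornerD hornerMn hornerM hornerXsubC subrr mul0r addr0.
by rewrite factS natrM -mulr_natr; ring.
Qed.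


Lemma legendre_facts n : odd n ->
  [/\ (size (legendre R n) <= n.+1)%N, (legendre R n).[1] != 0 &
      (legendre R n).[-1] = - (legendre R n).[1]].
Proof.
move=> on; rewrite /legendre.
set K := ((2 ^ n * n`!)%N%:R : R)^-1.
have E1 : ('X ^+ 2 - 1 : {poly R}) ^+ n = ('X - 1%:P) ^+ n * ('X - (-1)%:P) ^+ n.
  rewrite -exprMn polyCN polyC1; congr (_ ^+ _); ring.
have E2 : ('X ^+ 2 - 1 : {poly R}) ^+ n = ('X - (-1)%:P) ^+ n * ('X - 1%:P) ^+ n.
  by rewrite E1 mulrC.
have v1 : ((('X ^+ 2 - 1 : {poly R}) ^+ n)^`(n)).[1] = n`!%:R * 2 ^+ n.
  by rewrite E1 derivn_val horner_exp hornerXsubC opprK.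
have vm1 : ((('X ^+ 2 - 1 : {poly R}) ^+ n)^`(n)).[-1] = - (n`!%:R * 2 ^+ n).
  rewrite E2 derivn_val horner_exp hornerXsubC -opprD exprNn -signr_odd on expr1.
  by rewrite mulN1r mulrN.
have Kn0 : K != 0.
  by rewrite invr_eq0 pnatr_eq0 muln_eq0 negb_or expn_eq0 /= -lt0n fact_gt0.
split.
- apply: leq_trans (size_scale_leq _ _) _.
  apply/leq_sizeP => i hi; rewrite coef_derivn.
  have : (size (('X ^+ 2 - 1 : {poly R}) ^+ n) <= (2 * n).+1)%N.
    apply: leq_trans (size_poly_exp_leq _ _) _.
    by rewrite -polyC1 size_XnsubC.
  move=> /leq_sizeP -> ; first by rewrite mul0rn.
  lia.
- rewrite hornerZ v1 mulf_neq0 // mulf_neq0 //; first by rewrite pnatr_eq0 -lt0n fact_gt0.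
  by rewrite expf_neq0 // pnatr_eq0.
- by rewrite !hornerZ v1 vm1 mulrN.
Qed.


Lemma edge_form (N E : {poly R}) m : (0 < m)%N -> N \is monic -> size N = m.+1 ->
  N %| E -> (size E <= m.+2)%N ->
  exists al be : R, [/\ (forall t, E.[t] = (al * t + be) * N.[t]),
                        E`_m.+1 = al & E`_m = al * N`_m.-1 + be].
Proof.
move=> m0 mN sN dNE sE.
have N0 : N != 0 by apply: monic_neq0.
set q := E %/ N.
have Eq : E = q * N by rewrite divpK.
have sq : (size q <= 2)%N by rewrite size_divp // sN /= leq_subLR addn2.
have qE : q = q`_1 *: 'X + (q`_0)%:P.
  apply/polyP => i; rewrite coefD coefZ coefX coefC.
  case: i => [|[|i]] /=; rewrite ?mulr0 ?mulr1 ?add0r ?addr0 //.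
  by move/leq_sizeP: sq => ->.
exists q`_1, q`_0; split.
- by move=> t; rewrite Eq hornerM {1}qE hornerD hornerZ hornerX hornerC.
- rewrite Eq {1}qE mulrDl -scalerAl mul_polyC coefD !coefZ coefXM /=.
  have -> : N`_m = 1 by move/monicP: mN; rewrite lead_coefE sN.
  by move/leq_sizeP: (eq_leq sN) => -> //; rewrite mulr0 addr0 mulr1.
- rewrite Eq {1}qE mulrDl -scalerAl mul_polyC coefD !coefZ coefXM /=.
  have -> : (m == 0%N) = false by apply/negbTE; rewrite -lt0n.
  have -> : N`_m = 1 by move/monicP: mN; rewrite lead_coefE sN.
  by rewrite mulr1.
Qed.

Lemma E_shape m (F : {poly R}) (a b : R) : (0 < m)%N -> (size F <= m.+1)%N ->
  let E := F + a *: ('X - 'X^m) + b *: (1 - 'X^(m.+1)) in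
  [/\ (size E <= m.+2)%N, E`_m.+1 = - b,
      E`_m = F`_m + a * ((m == 1%N)%:R - 1) &
      (forall t, E.[t] = F.[t] + a * (t - t ^+ m) + b * (1 - t ^+ m.+1))].
Proof.
move=> m0 sF E; split.
- apply/leq_sizeP => j hj.
  rewrite /E !coefD !coefZ !coefB coefX !coefXn coef1.
  move/leq_sizeP: sF => -> ; last by lia.
  have -> : (j == 1%N) = false by apply/negbTE; lia.
  have -> : (j == m) = false by apply/negbTE; lia.
  have -> : (j == m.+1) = false by apply/negbTE; lia.
  have -> : (j == 0%N) = false by apply/negbTE; lia.
  by rewrite subrr !mulr0 !addr0.
- rewrite /E !coefD !coefZ !coefB coefX !coefXn coef1.
  move/leq_sizeP: sF => -> //.
  have -> : (m.+1 == 1%N) = false by apply/negbTE; lia.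
  rewrite eqxx /=.
  have -> : (m.+1 == m) = false by apply/negbTE; lia.
  by rewrite mulr0n subrr mulr0 sub0r mulrN1 !add0r.
- rewrite /E !coefD !coefZ !coefB coefX !coefXn coef1 eqxx.
  have -> : (m == m.+1) = false by apply/negbTE; lia.
  have -> : (m == 0%N) = false by apply/negbTE; lia.
  by rewrite subrr mulr0 addr0.
- by move=> t; rewrite /E !hornerD !hornerZ !hornerE.
Qed.

End H2.

Unset Implicit Arguments.
Set Strict Implicit.
Lemma main_lemma (R : rcfType) (k m : nat) (hm : m = (2 * k + 1)%N)
  (g : 'I_m -> R)
  (g_inj : injective g)
  (g_root : forall i, root (legendre R m) (g i))
  (I : 'I_((2 * k - 1) * (k - 1)) -> R * R)
  (I_int : forall i, -1 < (I i).1 < 1 /\ -1 < (I i).2 < 1)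
  (I_unisolvent : (1 < k)%N ->
     forall p q : R -> R -> R,
       inP (2 * k - 3) p -> inP (2 * k - 3) q ->
       (forall i, p (I i).1 (I i).2 = q (I i).1 (I i).2) ->
       forall x y, p x y = q x y)
  (v : R -> R -> R)
  (v_ER : inER m v)
  (v_G : forall i, v 1 (g i) = 0 /\ v (-1) (g i) = 0 /\
                   v (g i) 1 = 0 /\ v (g i) (-1) = 0)
  (v_I : forall i, v (I i).1 (I i).2 = 0) :
  forall x y, v x y = 0.
Proof.
have m0 : (0 < m)%N by rewrite hm; lia.
have mo : odd m by rewrite hm addn1 /= mul2n odd_double.
have sm : (-1) ^+ m = -1 :> R by rewrite -signr_odd mo expr1.
have sm1 : (-1) ^+ m.+1 = 1 :> R by rewrite exprS sm mulrNN mulr1.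
have [p [a [b [hp hv]]]] := v_ER.
have [Fr [hFr sFr tFr]] := inP_row hp.
have [Fc [hFc sFc tFc]] := inP_row (inP_swap hp).
pose rs := [seq g j | j <- enum 'I_m].
pose N := \prod_(z <- rs) ('X - z%:P).
have mN : N \is monic by apply: monic_prod_XsubC.
have sN : size N = m.+1 by rewrite size_prod_XsubC size_map size_enum_ord.
have urs : uniq_roots rs by rewrite uniq_rootsE map_inj_uniq ?enum_uniq.
have dvN : forall E : {poly R}, (forall j, E.[g j] = 0) -> N %| E.
  move=> E hE; apply: uniq_roots_dvdp => //.
  by apply/allP => z /mapP [j _ ->]; rewrite /root hE.
have [sL L1 Lm1] := legendre_facts R mo.
have dNL : N %| legendre R m by apply: dvN => j; apply/eqP; apply: g_root.
have sq : (size (legendre R m %/ N)%R <= 1)%N.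
  by rewrite size_divp ?monic_neq0 // sN /= leq_subLR addn1.
set c := (legendre R m %/ N)`_0.
have LE : forall t, (legendre R m).[t] = c * N.[t].
  by move=> t; rewrite -{1}(divpK dNL) hornerM {1}(size1_polyC sq) hornerC.
have c0 : c != 0 by move: L1; rewrite LE mulf_eq0 negb_or => /andP[].
have lam0 : N.[1] != 0 by move: L1; rewrite LE mulf_eq0 negb_or => /andP[].
have Nm1 : N.[-1] = - N.[1] by apply: (mulfI c0); rewrite -!LE Lm1 mulrN -LE.
set lam := N.[1].
pose E1 := Fr 1 + a *: ('X - 'X^m) + b *: (1 - 'X^(m.+1)).
pose E2 := Fr (-1) + (- a) *: ('X - 'X^m) + b *: (1 - 'X^(m.+1)).
pose E3 := Fc 1 + (- a) *: ('X - 'X^m) + (- b) *: (1 - 'X^(m.+1)).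
pose E4 := Fc (-1) + a *: ('X - 'X^m) + (- b) *: (1 - 'X^(m.+1)).
have [sE1 t1 c1 hE1] := E_shape a b m0 (sFr 1).
have [sE2 t2 c2 hE2] := E_shape (- a) b m0 (sFr (-1)).
have [sE3 t3 c3 hE3] := E_shape (- a) (- b) m0 (sFc 1).
have [sE4 t4 c4 hE4] := E_shape a (- b) m0 (sFc (-1)).
rewrite -/E1 in sE1 t1 c1 hE1.
rewrite -/E2 in sE2 t2 c2 hE2.
rewrite -/E3 in sE3 t3 c3 hE3.
rewrite -/E4 in sE4 t4 c4 hE4.
have hv1 : forall y, v 1 y = E1.[y].
  by move=> y; rewrite hv hE1 hFr !expr1n !mul1r.
have hv2 : forall y, v (-1) y = E2.[y].
  by move=> y; rewrite hv hE2 hFr sm sm1; ring.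
have hv3 : forall x, v x 1 = E3.[x].
  by move=> x; rewrite hv hE3 hFc !expr1n; ring.
have hv4 : forall x, v x (-1) = E4.[x].
  by move=> x; rewrite hv hE4 hFc sm sm1; ring.
have [al1 [be1 [f1 a1 b1]]] := edge_form m0 mN sN (dvN _ (fun j => etrans (esym (hv1 _)) (proj1 (v_G j)))) sE1.
have [al2 [be2 [f2 a2 b2]]] := edge_form m0 mN sN (dvN _ (fun j => etrans (esym (hv2 _)) (proj1 (proj2 (v_G j))))) sE2.
have [al3 [be3 [f3 a3 b3]]] := edge_form m0 mN sN (dvN _ (fun j => etrans (esym (hv3 _)) (proj1 (proj2 (proj2 (v_G j)))))) sE3.
have [al4 [be4 [f4 a4 b4]]] := edge_form m0 mN sN (dvN _ (fun j => etrans (esym (hv4 _)) (proj2 (proj2 (proj2 (v_G j)))))) sE4.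
have C1 : (al1 * 1 + be1) * lam = (al3 * 1 + be3) * lam by rewrite -f1 -f3 -hv1 -hv3.
have C2 : (al1 * -1 + be1) * (- lam) = (al4 * 1 + be4) * lam by rewrite -Nm1 -f1 -f4 -hv1 -hv4.
have C3 : (al2 * 1 + be2) * lam = (al3 * -1 + be3) * (- lam) by rewrite -Nm1 -f2 -f3 -hv2 -hv3.
have C4 : (al2 * -1 + be2) * (- lam) = (al4 * -1 + be4) * (- lam) by rewrite -Nm1 -f2 -f4 -hv2 -hv4.
have e1 := mulIf lam0 C1.
rewrite mulrN -mulNr in C2; have e2 := mulIf lam0 C2.
rewrite mulrN -mulNr in C3; have e3 := mulIf lam0 C3.
rewrite !mulrN in C4; have e4 := mulIf lam0 (oppr_inj C4).
have r1 := tFr (-1) 1; have r2 := tFc (-1) 1.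
rewrite a1 in t1; rewrite a2 in t2; rewrite a3 in t3; rewrite a4 in t4.
rewrite b1 in c1; rewrite b2 in c2; rewrite b3 in c3; rewrite b4 in c4.
rewrite r1 in c2; rewrite r2 in c4.
move: c1 c2 c3 c4; rewrite t1 t2 t3 t4.
have [u eu] : exists u : R, (m == 1%N)%:R - 1 = u by eexists.
rewrite eu; move: (N`_m.-1) => sig.
move=> c1 c2 c3 c4; rewrite !mulNr in c2 c3.
have [w ew] : exists w, a * u = w by exists (a * u).
rewrite ew in c1 c2 c3 c4.
have b0 : b = 0 by nra.
rewrite b0 in t1 t2 t3 t4 c1 c2 c3 c4.
have w0 : w = 0 by nra.
have z1 : be1 = 0 by nra.
have z2 : be2 = 0 by nra.
have z3 : be3 = 0 by nra.
have z4 : be4 = 0 by nra.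
have Z1 : forall y, v 1 y = 0 by move=> y; rewrite hv1 f1 t1 z1; ring.
have Z2 : forall y, v (-1) y = 0 by move=> y; rewrite hv2 f2 t2 z2; ring.
have Z3 : forall x, v x 1 = 0 by move=> x; rewrite hv3 f3 t3 z3; ring.
have Z4 : forall x, v x (-1) = 0 by move=> x; rewrite hv4 f4 t4 z4; ring.
have aA : forall x y, a * (x ^+ m * y - x * y ^+ m) = 0.
  move=> x y; case: (eqVneq m 1%N) => [m1 | mn1].
    by rewrite m1 !expr1 subrr mulr0.
  have : a * u = 0 by rewrite ew w0.
  rewrite -eu (negbTE mn1) mulr0n sub0r mulrN1 => /eqP; rewrite oppr_eq0 => /eqP ->.
  by rewrite mul0r.
have vP : inP m v.
  by apply: (inP_ext _ hp) => x y; rewrite hv b0 aA mul0r !addr0.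
clear -vP Z1 Z2 Z3 Z4 hm I_int I_unisolvent v_I.
have rowz : forall d (f : R -> R -> R) y0, inP d f ->
    (forall x, x != 1 -> x != -1 -> f x y0 = 0) -> forall x, f x y0 = 0.
  move=> d f y0 hf H x0.
  have [F [hF _ _]] := inP_row (inP_swap hf).
  have -> : f x0 y0 = (F y0).[x0] by rewrite -hF.
  suff -> : F y0 = 0 by rewrite horner0.
  by apply: poly_zero_ae => z hz1 hz2; rewrite -hF H.
have nz1 : forall x : R, x != 1 -> x - 1 != 0 by move=> x; rewrite subr_eq0.
have nz2 : forall x : R, x != -1 -> x - -1 != 0 by move=> x; rewrite subr_eq0.
have m2 : (-1 - 1 : R) != 0 by apply/eqP; lra.
have m3 : (-1 - -1 : R) = 0 by rewrite subrr.
have [g1 [hg1 e1]] := inP_div1 vP Z1.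
have G1 : forall y, g1 (-1) y = 0.
  by move=> y; have := Z2 y; rewrite e1 => /eqP; rewrite mulf_eq0 (negbTE m2) => /eqP.
have [g2 [hg2 e2]] := inP_div1 hg1 G1.
have G2 : forall x, g2 x 1 = 0.
  apply: (rowz _ _ _ hg2) => x h1 h2; have := Z3 x; rewrite e1 e2 => /eqP.
  by rewrite !mulf_eq0 (negbTE (nz1 _ h1)) (negbTE (nz2 _ h2)) => /eqP.
have [h3 [hh3 e3]] := inP_div1 (inP_swap hg2) G2.
pose g3 := fun x y => h3 y x.
have hg3 : inP m.-1.-1.-1 g3 := inP_swap hh3.
have G3 : forall x, g3 x (-1) = 0.
  apply: (rowz _ _ _ hg3) => x h1 h2; have := Z4 x; rewrite e1 e2 e3 => /eqP.
  by rewrite !mulf_eq0 (negbTE (nz1 _ h1)) (negbTE (nz2 _ h2)) (negbTE m2) => /eqP.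
have [h4 [hh4 e4]] := inP_div1 (inP_swap hg3) G3.
pose g4 := fun x y => h4 y x.
have hg4 : inP m.-1.-1.-1.-1 g4 := inP_swap hh4.
have vE : forall x y, v x y = (x - 1) * (x - -1) * (y - 1) * (y - -1) * g4 x y.
  by move=> x y; rewrite e1 e2 e3 (_ : h3 y x = g3 x y) // e4 /g4; ring.
move=> x y.
case: (ltnP 1 k) => hk.
  have d4 : m.-1.-1.-1.-1 = (2 * k - 3)%N by rewrite hm; lia.
  rewrite d4 in hg4.
  have H4 : forall x y, g4 x y = 0.
    move=> x0 y0; apply: (I_unisolvent hk g4 (fun _ _ => 0) hg4 (inP_zero _ _)) => i.
    have := v_I i; rewrite vE.
    have [/andP[i1 i2] /andP[i3 i4]] := I_int i.
    have nzI : ((I i).1 - 1) * ((I i).1 - -1) * ((I i).2 - 1) * ((I i).2 - -1) != 0.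
      by rewrite !mulf_neq0 // subr_eq0; apply/eqP; lra.
    by move=> /eqP; rewrite mulf_eq0 (negbTE nzI) => /eqP.
  by rewrite vE H4 mulr0.
have [k0|k1] : k = 0%N \/ k = 1%N by lia.
  have d1 : m.-1 = 0%N by rewrite hm k0.
  rewrite d1 in hg1.
  by rewrite e1 (inP0_const hg1 x y (-1) y) G1 mulr0.
have d3 : m.-1.-1.-1 = 0%N by rewrite hm k1.
rewrite d3 in hg3.
by rewrite e1 e2 e3 (_ : h3 y x = g3 x y) // (inP0_const hg3 x y x (-1)) G3 !mulr0.
Qed.

Theorem theorem3p1 (R : rcfType) (k : nat)
  (g : 'I_(2 * k + 1) -> R)
  (g_inj : injective g)
  (g_root : forall i, root (legendre R (2 * k + 1)) (g i))
  (I : 'I_((2 * k - 1) * (k - 1)) -> R * R)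
  (I_int : forall i, -1 < (I i).1 < 1 /\ -1 < (I i).2 < 1)
  (I_unisolvent : (1 < k)%N ->
     forall p q : R -> R -> R,
       inP (2 * k - 3) p -> inP (2 * k - 3) q ->
       (forall i, p (I i).1 (I i).2 = q (I i).1 (I i).2) ->
       forall x y, p x y = q x y)
  (v : R -> R -> R)
  (v_ER : inER (2 * k + 1) v)
  (v_G : forall i, v 1 (g i) = 0 /\ v (-1) (g i) = 0 /\
                   v (g i) 1 = 0 /\ v (g i) (-1) = 0)
  (v_I : forall i, v (I i).1 (I i).2 = 0) :
  forall x y, v x y = 0.
Proof. exact: (@main_lemma R k (2 * k + 1) (erefl _) g g_inj g_root I I_int I_unisolvent v v_ER v_G v_I). Qed.
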